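(* Let $n\ge3$. Let $\mathbf{b}_0=10^{n-1}\in\{0,1\}^n$ and, for $1\le i\le\lceil n/2\rceil-1$, let $\mathbf{b}_i\in\{0,1\}^n$ have ones exactly in coordinates $2i$ and $2i+1$. Let $V_{\mathcal{B}}=\mathrm{span}_{\mathbb{F}_2}\{\mathbf{b}_0,\ldots,\mathbf{b}_{\lceil n/2\rceil-1}\}$. For $\mathbf{a}=(a_0,a_1,\ldots,a_{\lceil n/2\rceil-1})\in\{0,1\}^{\lceil n/2\rceil}$ and $\mathbf{s}=\sum_{i=0}^{\lceil n/2\rceil-1}a_i\mathbf{b}_i$ (sum over $\mathbb{F}_2^n$), \[ \widehat{\mathds{1}_{S_2}}(\mathbf{s})=2^{\lfloor n/2\rfloor-n}\cdot(-1)^{w(\mathbf{a})-a_0}. \] Moreover, $\widehat{\mathds{1}_{S_2}}(\mathbf{s})=0$ for all $\mathbf{s}\notin V_{\mathcal{B}}$.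
   Context: Fourier transform: $\widehat{f}(\mathbf{s})=2^{-n}\sum_{\mathbf{x}\in\{0,1\}^n}f(\mathbf{x})(-1)^{\mathbf{x}\cdot\mathbf{s}}$. $w(\cdot)$ is Hamming weight. $S_2\subseteq\{0,1\}^n$ (the 2-charge constraint) is the set of $\mathbf{x}\in\{0,1\}^n$ such that, with $y_i=(-1)^{x_i}$, every running sum satisfies $0\le\sum_{i=1}^r y_i\le 2$ for $1\le r\le n$. *)

(* Defs.v *)
From HB Require Import structures.
From mathcomp Require Import all_boot all_order all_algebra.
Set Implicit Arguments. Unset Strict Implicit. Unset Printing Implicit Defensive.
Import Order.TTheory GRing.Theory Num.Theory.
Local Open Scope ring_scope.

(* Binary vectors in {0,1}^n, coordinates indexed 0..n-1
   (paper coordinate k corresponds to index k-1). *)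
Definition bvec (n : nat) := {ffun 'I_n -> bool}.

Definition weight (m : nat) (x : {ffun 'I_m -> bool}) : nat :=
  (\sum_(i < m) (x i : nat))%N.

Definition dotb (n : nat) (x s : bvec n) : bool :=
  odd (\sum_(i < n) ((x i && s i) : nat))%N.

Definition fourier (R : numFieldType) (n : nat) (f : bvec n -> R) (s : bvec n) : R :=
  ((2 : R) ^+ n)^-1 * \sum_(x : bvec n) f x * (-1) ^+ (dotb x s).

Definition psum (n : nat) (x : bvec n) (r : nat) : int :=
  \sum_(i < n | (i < r)%N) (if x i then (-1)%R else 1%R).

Definition S2 (n : nat) (x : bvec n) : bool :=
  [forall r : 'I_n, (0 <= psum x r.+1) && (psum x r.+1 <= 2)].

Definition indS2 (R : numFieldType) (n : nat) (x : bvec n) : R := (S2 x)%:R.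

(* ceil(n/2), valid for n >= 1 *)
Definition ceilhalf (n : nat) : nat := (n.-1)./2.+1.

(* basis vector b_i (i = 0: 10^{n-1}; i >= 1: ones at paper coordinates 2i, 2i+1,
   i.e. indices 2i-1, 2i) *)
Definition bB (n : nat) (i : nat) : bvec n :=
  [ffun j : 'I_n => if i == 0%N then val j == 0%N
                    else (val j == (2 * i).-1)%N || (val j == 2 * i)%N].

Definition spanB (n : nat) (a : {ffun 'I_(ceilhalf n) -> bool}) : bvec n :=
  [ffun j : 'I_n => odd (\sum_(i < ceilhalf n) ((a i && bB n i j) : nat))%N].

Definition inVB (n : nat) (s : bvec n) : Prop :=
  exists a : {ffun 'I_(ceilhalf n) -> bool}, s = spanB a.

(* Main.v *)
Require Import Defs.
From HB Require Import structures.
From mathcomp Require Import all_boot all_order all_algebra.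
From mathcomp Require Import zify ring.
Import Order.TTheory GRing.Theory Num.Theory.
Local Open Scope ring_scope.

Section Comb.
Variable n : nat.
Implicit Types x : bvec n.

Definition xa x (r : nat) : bool := if insub r is Some i then x i else false.

Lemma xa_ord x (i : 'I_n) : xa x i = x i.
Proof. by rewrite /xa valK. Qed.

Lemma xa_out x r : (n <= r)%N -> xa x r = false.
Proof. by move=> h; rewrite /xa insubN // -leqNgt. Qed.

Definition yy (b : bool) : int := if b then (-1)%R else 1%R.

Lemma psum0 x : psum x 0 = 0.
Proof. by rewrite /psum big_pred0 // => i; rewrite ltn0. Qed.

Lemma psumS x r : (r < n)%N -> psum x r.+1 = psum x r + yy (xa x r).
Proof.
move=> hr; rewrite /psum (bigD1 (Ordinal hr)) //= addrC.
have -> : xa x r = x (Ordinal hr) by rewrite -(xa_ord x (Ordinal hr)).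
congr (_ + _); apply: eq_bigl => i /=.
rewrite -(inj_eq val_inj) /= ltnS leq_eqVlt.
by case: ltngtP.
Qed.

Definition Cond x := ~~ xa x 0 /\ forall m, (2 * m+2 < n)%N -> xa x (2 * m+1) != xa x (2 * m+2).

Lemma Cond_odd x : Cond x -> forall m, (2 * m+1 <= n)%N -> psum x (2 * m+1) = 1.
Proof.
move=> [h0 hc]; elim=> [|m IH] h.
  have -> : (2 * 0+1 = 0.+1)%N by [].
  rewrite psumS ?psum0; last lia.
  by rewrite (negbTE h0).
have -> : (2 * m.+1+1 = (2 * m+1).+1.+1)%N by lia.
rewrite psumS; last lia.
rewrite psumS; last lia.
rewrite IH; last lia.
have -> : ((2 * m+1).+1 = 2 * m+2)%N by lia.
have := hc m ltac:(lia).
by case: (xa x (2 * m+1)); case: (xa x (2 * m+2)).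
Qed.

Lemma Cond_S2 x : Cond x -> S2 x.
Proof.
move=> hC; apply/forallP => r.
have hr := ltn_ord r.
have := odd_double_half r; case: (odd r) => /= e.
- have -> : (r.+1 = (2 * r./2 + 1).+1)%N by lia.
  rewrite psumS; last lia.
  rewrite Cond_odd //; last lia.
  by case: (xa x _).
- have -> : (r.+1 = 2 * r./2 + 1)%N by lia.
  by rewrite Cond_odd //; lia.
Qed.

Lemma S2_bound x r : S2 x -> (r < n)%N -> 0 <= psum x r.+1 <= 2.
Proof. by move=> /forallP h hr; apply: (h (Ordinal hr)). Qed.

Lemma S2_odd x : S2 x -> forall m, (2 * m+1 <= n)%N -> psum x (2 * m+1) = 1.
Proof.
move=> hS; elim=> [|m IH] h.
  have -> : (2 * 0+1 = 0.+1)%N by [].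
  have := S2_bound _ 0 hS ltac:(lia).
  rewrite psumS ?psum0; last lia.
  by case: (xa x 0).
have e : (2 * m.+1+1 = (2 * m+1).+1.+1)%N by lia.
have := S2_bound _ (2 * m+1).+1 hS ltac:(lia).
rewrite e psumS; last lia.
rewrite psumS; last lia.
rewrite IH; last lia.
by case: (xa x (2 * m+1)); case: (xa x _).
Qed.

Lemma S2_Cond x : S2 x -> Cond x.
Proof.
move=> hS; split.
  case: (ltnP 0 n) => hn; last by rewrite xa_out.
  have := S2_bound _ _ hS hn; rewrite psumS // psum0.
  by case: (xa x 0).
move=> m hm.
have := S2_bound _ (2 * m+1).+1 hS ltac:(lia).
rewrite psumS; last lia.
rewrite psumS; last lia.
rewrite S2_odd //; last lia.
have -> : ((2 * m+1).+1 = 2 * m+2)%N by lia.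
by case: (xa x (2 * m+1)); case: (xa x _).
Qed.

End Comb.
Arguments xa {n}. Arguments xa_ord {n}. Arguments xa_out {n}. Arguments Cond {n}.
Arguments S2_Cond {n x}. Arguments Cond_S2 {n x}.

Lemma sum_xa n (x : bvec n) a :
  (\sum_(j < n) ((x j && (val j == a)) : nat))%N = xa x a.
Proof.
case: (ltnP a n) => h.
  rewrite (bigD1 (Ordinal h)) //= eqxx andbT big1 ?addn0.
    by rewrite -(xa_ord x (Ordinal h)).
  move=> j; rewrite -(inj_eq val_inj) /= => /negbTE ->; by rewrite andbF.
rewrite xa_out // big1 // => j _.
by rewrite (ltn_eqF (leq_trans (ltn_ord j) h)) andbF.
Qed.

Lemma split_or (b : bool) (j p q : nat) : p != q ->
  ((b && ((j == p) || (j == q))) : nat) = ((b && (j == p)) + (b && (j == q)))%N.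
Proof.
move=> hpq; case: b => //=.
case: (eqVneq j p) => [->|_] /=; first by rewrite (negbTE hpq).
by case: (j == q).
Qed.

Lemma dot_b0 n (x : bvec n) : dotb x (bB n 0) = xa x 0.
Proof.
rewrite /dotb.
under eq_bigr => j _ do rewrite ffunE /=.
by rewrite sum_xa; case: (xa x 0).
Qed.

Lemma dot_bi n (x : bvec n) i : (0 < i)%N ->
  dotb x (bB n i) = xa x (2 * i).-1 (+) xa x (2 * i).
Proof.
move=> hi; rewrite /dotb.
have hpq : ((2 * i).-1 != 2 * i)%N by lia.
under eq_bigr => j _ do rewrite ffunE (gtn_eqF hi) split_or //.
by rewrite big_split /= !sum_xa oddD !oddb.
Qed.

Lemma ceilhalfE n i : (0 < n)%N -> (i < ceilhalf n)%N = (2 * i < n)%N.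
Proof. move=> hn; rewrite /ceilhalf; apply/idP/idP; lia. Qed.

Lemma S2_dot n (x : bvec n) : (0 < n)%N ->
  S2 x <-> forall i : 'I_(ceilhalf n), dotb x (bB n i) = (val i != 0%N).
Proof.
move=> hn; split.
  move=> /S2_Cond [h0 hc] [[|i] hi] /=; first by rewrite dot_b0 (negbTE h0).
  rewrite dot_bi //.
  have := hc i ltac:(move: hi; rewrite ceilhalfE //; lia).
  have -> : ((2 * i.+1).-1 = 2 * i + 1)%N by lia.
  have -> : (2 * i.+1 = 2 * i + 2)%N by lia.
  by case: (xa x _); case: (xa x _).
move=> h; apply: Cond_S2; split.
  by have := h ord0; rewrite dot_b0 /= => ->.
move=> m hm.
have hi : (m.+1 < ceilhalf n)%N by rewrite ceilhalfE //; lia.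
have := h (Ordinal hi); rewrite dot_bi //; change (nat_of_ord (Ordinal hi)) with m.+1.
have -> : ((2 * m.+1).-1 = 2 * m + 1)%N by lia.
have -> : (2 * m.+1 = 2 * m + 2)%N by lia.
by case: (xa x _); case: (xa x _).
Qed.

Lemma bB_even n i' i (j : 'I_n) : val j = (2 * i)%N -> bB n i' j = (i' == i).
Proof.
move=> hj; rewrite ffunE hj.
case: i' => [|i'] /=.
  by apply/idP/idP => /eqP h; apply/eqP; lia.
apply/idP/idP => [/orP [] /eqP h | /eqP h]; first lia.
  by apply/eqP; lia.
by apply/orP; right; apply/eqP; lia.
Qed.

Lemma spanB_coord n (a : {ffun 'I_(ceilhalf n) -> bool}) (i : 'I_(ceilhalf n))
  (h : (2 * i < n)%N) : spanB a (Ordinal h) = a i.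
Proof.
rewrite ffunE.
under eq_bigr => i' _ do rewrite (@bB_even n i' i (Ordinal h) erefl).
rewrite (bigD1 i) //= eqxx andbT big1 ?addn0 ?oddb //.
by move=> j /negbTE; rewrite -(inj_eq val_inj) => -> ; rewrite andbF.
Qed.

Lemma spanB_inj n : (0 < n)%N -> injective (@spanB n).
Proof.
move=> hn a b e; apply/ffunP => i.
have h : (2 * i < n)%N by rewrite -ceilhalfE.
by rewrite -(@spanB_coord n a i h) -(@spanB_coord n b i h) e.
Qed.

Section Alg.
Variable R : numFieldType.
Variable n : nat.

Definition ch (x u : bvec n) : R := (-1) ^+ (dotb x u).

Lemma chE x u : ch x u = \prod_(j < n) (-1) ^+ (x j * u j)%N.
Proof.
rewrite /ch /dotb signr_odd -prodrXr; apply: eq_bigr => j _; by rewrite mulnb.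
Qed.

Lemma ortho u s : \sum_(x : bvec n) ch x u * ch x s = if u == s then 2 ^+ n else 0.
Proof.
under eq_bigr => x _ do rewrite !chE -big_split /=.
rewrite -(bigA_distr_bigA (fun (j : 'I_n) (b : bool) => (-1) ^+ (b * u j)%N * (-1) ^+ (b * s j)%N)) /=.
under eq_bigr => j _ do rewrite big_bool /=.
case: eqP => [<-|/ffunP hne].
  rewrite (eq_bigr (fun=> 2)) ?prodr_const ?card_ord // => j _.
  case: (u j) => /=; ring.
case: (pickP (fun j => u j != s j)) => [j hj | h]; last first.
  by case: hne => j; apply/eqP; move: (h j) => /= /negbFE.
rewrite (bigD1 j) //=; apply/eqP; rewrite mulf_eq0; apply/orP; left; apply/eqP.
move: hj; case: (u j); case: (s j) => //= _; ring.
Qed.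

Lemma chi_span k (v : 'I_k -> bvec n) (a : {ffun 'I_k -> bool}) x :
  \prod_(i < k) ch x (v i) ^+ (a i)
  = ch x [ffun j => odd (\sum_(i < k) ((a i && v i j) : nat))%N].
Proof.
under eq_bigr => i _ do rewrite chE -prodrXl.
rewrite exchange_big chE /=; apply: eq_bigr => j _.
rewrite ffunE mulnC exprM signr_odd -exprM big_distrl /= expr_sum.
apply: eq_bigr => i _; rewrite -exprM; congr (_ ^+ _).
rewrite -mulnb; lia.
Qed.

Definition eps (a : {ffun 'I_(ceilhalf n) -> bool}) : R :=
  \prod_(i < ceilhalf n) ((-1) ^+ (val i != 0%N)) ^+ (a i).

Lemma bool_half (d e : bool) : (1 + (-1) ^+ e * (-1) ^+ d) / 2 = ((d == e) : nat)%:R :> R.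
Proof.
have h2 : (2 : R) != 0 by rewrite pnatr_eq0.
by case: d; case: e => /=; field.
Qed.

Lemma indS2_prod x : (0 < n)%N -> indS2 R x
  = \prod_(i < ceilhalf n) ((1 + (-1) ^+ (val i != 0%N) * ch x (bB n i)) / 2).
Proof.
move=> hn.
under eq_bigr => i _ do rewrite /ch bool_half.
rewrite /indS2.
case hS: (S2 x).
  rewrite big1 // => i _; by rewrite (proj1 (@S2_dot n x hn) hS i) eqxx.
case: (pickP (fun i : 'I_(ceilhalf n) => dotb x (bB n i) != (val i != 0%N))) => [i hi | h].
  by rewrite (bigD1 i) //= (negbTE hi) /= mul0r.
have : S2 x by apply/(@S2_dot n x hn) => i; apply/eqP; move: (h i) => /= /negbFE.
by rewrite hS.
Qed.

Lemma prod_expand k (u : 'I_k -> R) : \prod_(i < k) ((1 + u i) / 2)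
  = (2 ^+ k)^-1 * \sum_(a : {ffun 'I_k -> bool}) \prod_(i < k) u i ^+ (a i).
Proof.
rewrite big_split /= prodr_const card_ord exprVn mulrC; congr (_ * _).
rewrite -(bigA_distr_bigA (fun i (b : bool) => u i ^+ b)) /=; apply: eq_bigr => i _; by rewrite big_bool /= expr1 expr0 addrC.
Qed.

Lemma indS2_expand x : (0 < n)%N -> indS2 R x
  = (2 ^+ ceilhalf n)^-1 * \sum_a eps a * ch x (spanB a).
Proof.
move=> hn; rewrite indS2_prod // prod_expand; congr (_ * _).
apply: eq_bigr => a _.
rewrite (eq_bigr (fun i => ((-1) ^+ (val i != 0%N)) ^+ (a i) * ch x (bB n i) ^+ (a i))); last first.
  by move=> i _; rewrite exprMn.
rewrite big_split /=; congr (_ * _).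
by rewrite (chi_span _ (fun i : 'I_(ceilhalf n) => bB n i) a x).
Qed.

Lemma eps_val (a : {ffun 'I_(ceilhalf n) -> bool}) :
  eps a = (-1) ^+ (weight a - a ord0)%N.
Proof.
rewrite /eps /weight; under eq_bigr => i _ do rewrite -exprM.
rewrite prodrXr; congr (_ ^+ _).
rewrite !big_ord_recl /= add0n addKn.
by apply: eq_bigr => i _; rewrite mul1n.
Qed.

Lemma fourier_eq s : (0 < n)%N -> fourier (@indS2 R n) s
  = (2 ^+ n)^-1 * ((2 ^+ ceilhalf n)^-1 *
      \sum_a eps a * (if spanB a == s then 2 ^+ n else 0)).
Proof.
move=> hn; rewrite /fourier; congr (_ * _).
under eq_bigr => x _ do rewrite indS2_expand // -mulrA mulr_suml.
rewrite -mulr_sumr exchange_big; congr (_ * _); apply: eq_bigr => a _.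
rewrite -(ortho (spanB a) s) mulr_sumr; apply: eq_bigr => x _.
by rewrite mulrA.
Qed.

End Alg.

Theorem mainTheorem10 (R : numFieldType) (n : nat) (hn : (3 <= n)%N) :
  (forall a : {ffun 'I_(ceilhalf n) -> bool},
     fourier (@indS2 R n) (spanB a)
     = ((2 : R) ^+ (n - n./2))^-1 * (-1) ^+ (weight a - a ord0)%N)
  /\ (forall s : bvec n, ~ inVB s -> fourier (@indS2 R n) s = 0).
Proof.
have hn0 : (0 < n)%N by lia.
have h2 : (2 : R) ^+ n != 0 by rewrite expf_neq0 // pnatr_eq0.
split.
  move=> a; rewrite fourier_eq //.
  rewrite (bigD1 a) //= eqxx big1 ?addr0; last first.
    by move=> b hb; rewrite (inj_eq (@spanB_inj n hn0)) (negbTE hb) mulr0.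
  have -> : (n - n./2 = ceilhalf n)%N by rewrite /ceilhalf; lia.
  by rewrite eps_val [_ * 2 ^+ n]mulrC mulrCA mulKf.
move=> s hs; rewrite fourier_eq // big1 ?mulr0 // => a _.
case: eqP => [e|_]; last by rewrite mulr0.
by case: hs; exists a.
Qed.
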